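(* Let $n\ge 3$ be an integer. If $G$ is a graph on $2n$ vertices with at least $n^2-1$ edges such that $G$ does not contain two distinct vertices of the same degree joined by a path of length three, then $G$ is isomorphic to the complete bipartite graph $K_{n-1,n+1}$. (Equivalently, $K_{n-1,n+1}$ is the unique such graph.)
   Context: A path of length three joining vertices $a$ and $b$ is a path $a\,x\,y\,b$ with four distinct vertices and three edges $ax,xy,yb$. Graphs are finite and simple. *)

(* Defs.v *)
From mathcomp Require Import all_boot.
Set Implicit Arguments. Unset Strict Implicit. Unset Printing Implicit Defensive.

Definition simple_graph (T : finType) (e : rel T) : Prop :=
  symmetric e /\ irreflexive e.

Definition edges (T : finType) (e : rel T) : {set {set T}} :=
  [set E : {set T} | [exists x, exists y, (e x y) && (E == [set x; y])]].

Definition num_edges (T : finType) (e : rel T) : nat := #|edges e|.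

Definition degree (T : finType) (e : rel T) (x : T) : nat := #|[set y | e x y]|.

Definition path3 (T : finType) (e : rel T) (a b : T) : Prop :=
  exists x y : T,
    [/\ uniq [:: a; x; y; b], e a x, e x y & e y b].

Definition no_equal_degree_path3 (T : finType) (e : rel T) : Prop :=
  forall a b : T, a != b -> degree e a = degree e b -> ~ path3 e a b.

Definition Kbip (p q : nat) : rel ('I_p + 'I_q)%type :=
  fun u v => match u, v with
             | inl _, inr _ => true
             | inr _, inl _ => true
             | _, _ => false
             end.
Arguments Kbip : clear implicits.

Definition graph_iso (T T' : finType) (e : rel T) (e' : rel T') : Prop :=
  exists f : T -> T', bijective f /\ forall u v, e' (f u) (f v) = e u v.

(* Main.v *)
Require Import Defs.
From mathcomp Require Import all_boot.
From mathcomp Require Import zify.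
Set Implicit Arguments. Unset Strict Implicit. Unset Printing Implicit Defensive.

Section Basic.
Variables (T : finType) (e : rel T).
Hypothesis esym : symmetric e.
Hypothesis eirr : irreflexive e.
Hypothesis valid : no_equal_degree_path3 e.

Local Notation d := (degree e).
Local Notation Nb x := [set y | e x y].

Lemma e_neq x y : e x y -> x != y.
Proof. by apply: contraTneq => ->; rewrite eirr. Qed.

Lemma noP3 a x y b : e a x -> e x y -> e y b -> a != y -> x != b -> a != b ->
  d a = d b -> False.
Proof.
move=> hax hxy hyb ay xb ab hd; apply: (valid ab hd); exists x, y; split => //.
rewrite /= !inE !negb_or (e_neq hax) ay ab (e_neq hxy) xb (e_neq hyb) /=.
by [].
Qed.

Lemma handshake : \sum_x d x = 2 * num_edges e.
Proof.
have h1 : \sum_x d x = #|[set p : T * T | e p.1 p.2]|.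
  rewrite -sum1_card.
  rewrite (eq_bigr (fun x => \sum_y (e x y : nat))); last first.
    by move=> x _; rewrite /degree -sum1_card big_mkcond /=; apply: eq_bigr => y _; rewrite inE; case: (e x y).
  rewrite pair_big /= [in RHS]big_mkcond /=; apply: eq_bigr => p _; rewrite inE; by case: (e p.1 p.2).
rewrite h1 -sum1_card (partition_big_imset (fun p : T * T => [set p.1; p.2])) /=.
have -> : [set [set p.1; p.2] | p in [set p : T * T | e p.1 p.2]] = edges e.
  apply/setP => E; rewrite /edges inE; apply/imsetP/existsP.
    by case=> [[x y]]; rewrite inE /= => hxy ->; exists x; apply/existsP; exists y; rewrite hxy eqxx.
  by case=> x /existsP [y /andP [hxy /eqP ->]]; exists (x, y); rewrite ?inE.
rewrite /num_edges mulnC -sum_nat_const.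
apply: eq_bigr => E; rewrite /edges inE => /existsP [x /existsP [y /andP [hxy /eqP hE]]].
have xy := e_neq hxy.
rewrite sum1_card.
transitivity #|[set (x, y); (y, x)]|.
  apply: eq_card => -[a b]; rewrite !inE /= hE.
  apply/idP/idP.
    case/andP => hab /eqP hs; rewrite inE /= in hab.
    have ha : a \in [set x; y] by rewrite -hs !inE eqxx.
    have hb : b \in [set x; y] by rewrite -hs !inE eqxx orbT.
    have hx : x \in [set a; b] by rewrite hs !inE eqxx.
    rewrite !inE in ha hb hx.
    have abn := e_neq hab.
    case/orP: ha => /eqP ea; case/orP: hb => /eqP eb; subst.
    - by rewrite eqxx in abn.
    - by rewrite !eqxx.
    - by rewrite !eqxx orbT.
    - by rewrite eqxx in abn.
  case/orP => /eqP [-> ->]; rewrite unfold_in /= inE /=; first by rewrite hxy eqxx.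
  rewrite esym hxy /=; apply/eqP/setP => z; rewrite !inE orbC //.
rewrite cards2; suff -> : (x, y) != (y, x) by [].
by apply/negP => /eqP [ex _]; rewrite ex eqxx in xy.
Qed.

End Basic.

Section Split.
Variables (T : finType) (e : rel T).
Hypothesis esym : symmetric e.
Hypothesis eirr : irreflexive e.

Local Notation d := (degree e).
Definition Nbr x := [set y | e x y].
Definition Wset u := [set x | (x != u) && ~~ e u x].

Lemma e_neq' x y : e x y -> x != y.
Proof. by apply: contraTneq => ->; rewrite eirr. Qed.

Lemma degE x : d x = #|Nbr x|. Proof. by []. Qed.

Lemma sum_split (F : T -> nat) u :
  \sum_x F x = F u + \sum_(a in Nbr u) F a + \sum_(w in Wset u) F w.
Proof.
rewrite (bigD1 u) //= -addnA; congr (_ + _).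
rewrite (bigID (fun x => e u x)) /=; congr (_ + _); apply: eq_bigl => x; rewrite !inE.
  by apply/andP/idP => [[] //|h]; split => //; rewrite eq_sym (e_neq' h).
by [].
Qed.

Lemma cardT_split u : #|T| = 1 + d u + #|Wset u|.
Proof.
have := sum_split (fun _ => 1) u.
rewrite !sum1_card -degE => <-.
by rewrite -sum1_card.
Qed.

Lemma in_WsetP u x : (x \in Wset u) = (x != u) && ~~ e u x.
Proof. by rewrite inE. Qed.

Lemma degD u a : a \in Nbr u -> d a = 1 + #|Nbr a :&: Nbr u| + #|Nbr a :&: Wset u|.
Proof.
rewrite inE => hua.
rewrite degE -(cardsID (Nbr u) (Nbr a)) (addnC 1) -addnA; congr (_ + _).
rewrite (cardsD1 u (Nbr a :\: Nbr u)) !inE esym hua eirr /=; congr (_ + _).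
apply: eq_card => x; rewrite !inE.
by case: (x =P u) => [->|] /=; [rewrite andbF | move=> _; rewrite andbC].
Qed.

Lemma degW u w : w \in Wset u -> d w = #|Nbr w :&: Nbr u| + #|Nbr w :&: Wset u|.
Proof.
rewrite inE => /andP [wu nuw].
rewrite degE -(cardsID (Nbr u) (Nbr w)); congr (_ + _).
apply: eq_card => x; rewrite !inE.
case: (x =P u) => [->|] /=; last by move=> _; rewrite andbC.
by rewrite esym (negbTE nuw) andbF.
Qed.

Lemma card_NW u a : #|Nbr a :&: Wset u| <= #|Wset u|.
Proof. by apply: subset_leq_card; apply: subsetIr. Qed.

Lemma card_NWw u w : w \in Wset u -> #|Nbr w :&: Wset u| < #|Wset u|.
Proof.
move=> hw; rewrite (cardsD1 w (Wset u)) hw add1n ltnS.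
apply: subset_leq_card; apply/subsetP => x; rewrite !inE => /andP [hwx ->].
by rewrite andbT; apply: contraTneq hwx => ->; rewrite eirr.
Qed.

End Split.

Lemma sum_subset_le (I : finType) (A B : {set I}) (F : I -> nat) :
  A \subset B -> \sum_(i in A) F i <= \sum_(i in B) F i.
Proof.
move=> sAB; rewrite [X in _ <= X](big_setID A) /= (setIidPr sAB); exact: leq_addr.
Qed.

Section Tools.
Variable I : finType.

Lemma sum_le_const (A : {set I}) (F : I -> nat) c :
  (forall i, i \in A -> F i <= c) -> \sum_(i in A) F i <= #|A| * c.
Proof. by move=> h; rewrite -sum_nat_const; apply: leq_sum. Qed.

Lemma sum_ge_const (A : {set I}) (F : I -> nat) c :
  (forall i, i \in A -> c <= F i) -> #|A| * c <= \sum_(i in A) F i.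
Proof. by move=> h; rewrite -sum_nat_const; apply: leq_sum. Qed.

Lemma card_inj_range (A : {set I}) (f : I -> nat) lo hi :
  {in A &, injective f} -> (forall i, i \in A -> lo <= f i <= hi) ->
  #|A| <= (hi - lo).+1.
Proof.
move=> inj hr.
pose g (i : I) : 'I_(hi - lo).+1 := inord (f i - lo).
have gK i : i \in A -> (g i : nat) = f i - lo.
  move=> hi'; rewrite inordK //; case/andP: (hr i hi') => h1 h2; lia.
have ginj : {in A &, injective g}.
  move=> x y hx hy /(congr1 (@nat_of_ord _)); rewrite !gK // => h.
  apply: inj => //; case/andP: (hr x hx) => ? ?; case/andP: (hr y hy) => ? ?; lia.
by rewrite -(card_in_imset ginj) -[X in _ <= X]card_ord; apply: max_card.
Qed.

Lemma dbl_sum_ord K : 2 * (\sum_(j < K.+1) (j : nat)) = K * K.+1.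
Proof.
elim: K => [|K IH]; first by rewrite big_ord1.
rewrite big_ord_recr /= mulnDr IH; lia.
Qed.

Lemma sum_inj_range (A : {set I}) (f : I -> nat) K :
  {in A &, injective f} -> (forall i, i \in A -> 2 <= f i <= K) ->
  2 * (\sum_(i in A) f i) <= K * K.+1 - 2.
Proof.
move=> inj hr.
case: (leqP K 1) => hK.
  have -> : A = set0.
    apply/setP => x; rewrite inE; apply/negP => hx.
    by case/andP: (hr x hx) => h1 h2; lia.
  by rewrite big_set0.
pose g (i : I) : 'I_K.+1 := inord (f i).
have gK i : i \in A -> (g i : nat) = f i.
  by move=> hi'; rewrite inordK //; case/andP: (hr i hi') => h1 h2; lia.
have ginj : {in A &, injective g}.
  by move=> x y hx hy /(congr1 (@nat_of_ord _)); rewrite !gK // => h; apply: inj.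
have -> : \sum_(i in A) f i = \sum_(j in g @: A) (j : nat).
  by rewrite big_imset //=; apply: eq_bigr => i hi; rewrite gK.
have sub : g @: A \subset [set j : 'I_K.+1 | 2 <= j].
  by apply/subsetP => j /imsetP [i hi ->]; rewrite inE gK //; case/andP: (hr i hi).
have := sum_subset_le (fun j : 'I_K.+1 => (j : nat)) sub.
have htot := dbl_sum_ord K.
rewrite (bigID (fun j : 'I_K.+1 => 2 <= j)) /= in htot.
have h01 : \sum_(j < K.+1 | ~~ (2 <= j)) (j : nat) = 1.
  rewrite (bigD1 (inord 1)) /=; last by rewrite inordK //; lia.
  rewrite inordK; last lia.
  rewrite big1 // => j /andP [h1 h2]; apply/eqP; move: h1 h2.
  case: j => [[|[|j]] hj] //= h1 h2.
  by exfalso; move: h2; rewrite -(inj_eq val_inj) /= inordK //; lia.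
rewrite h01 in htot.
have -> : \sum_(j in [set j : 'I_K.+1 | 2 <= j]) (j : nat) = \sum_(j < K.+1 | 2 <= j) (j : nat).
  by apply: eq_bigl => j; rewrite inE.
move: htot; set X := K * K.+1; set S1 := \sum_(j < K.+1 | 1 < j) (j : nat).
set S2 := \sum_(j in g @: A) (j : nat); lia.
Qed.


Lemma card_gt_pick (A : {set I}) k : k < #|A| -> exists a, a \in A.
Proof. by move=> h; apply/card_gt0P; lia. Qed.

Lemma pick_other (A : {set I}) (a : I) : 1 < #|A| -> exists b, (b \in A) && (b != a).
Proof.
move=> h; have : 0 < #|A :\ a| by rewrite (cardsD1 a A) in h; case: (a \in A) h => /= h; lia.
by case/card_gt0P => b; rewrite !inE => /andP [h1 h2]; exists b; rewrite h1 h2.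
Qed.

Lemma pick_other2 (A : {set I}) (a b : I) : 2 < #|A| -> exists c, [&& c \in A, c != a & c != b].
Proof.
move=> h; have : 0 < #|A :\ a :\ b|.
  move: h; rewrite (cardsD1 a A) (cardsD1 b (A :\ a)).
  by case: (a \in A); case: (b \in A :\ a) => /=; lia.
by case/card_gt0P => c; rewrite !inE => /and3P [h1 h2 h3]; exists c; rewrite h1 h2 h3.
Qed.

Lemma pick_other3 (A : {set I}) (a b c : I) : 3 < #|A| ->
  exists x, [&& x \in A, x != a, x != b & x != c].
Proof.
move=> h; have : 0 < #|A :\ a :\ b :\ c|.
  move: h; rewrite (cardsD1 a A) (cardsD1 b (A :\ a)) (cardsD1 c (A :\ a :\ b)).
  by case: (a \in A); case: (b \in A :\ a); case: (c \in _) => /=; lia.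
by case/card_gt0P => x; rewrite !inE => /and4P [h1 h2 h3 h4]; exists x; rewrite h1 h2 h3 h4.
Qed.

End Tools.

Lemma sum_ge_term (I : finType) (A : {set I}) (F : I -> nat) i :
  i \in A -> F i <= \sum_(j in A) F j.
Proof. by move=> hi; rewrite (bigD1 i) //=; apply: leq_addr. Qed.

Lemma sum0_term (I : finType) (A : {set I}) (F : I -> nat) i :
  \sum_(j in A) F j = 0 -> i \in A -> F i = 0.
Proof. by move=> h0 hi; have := sum_ge_term F hi; rewrite h0; lia. Qed.

Section Main.
Variables (T : finType) (e : rel T) (n : nat).
Hypothesis esym : symmetric e.
Hypothesis eirr : irreflexive e.
Hypothesis valid : no_equal_degree_path3 e.
Hypothesis hn : 3 <= n.
Hypothesis hT : #|T| = 2 * n.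
Hypothesis hS : 2 * (n * n) <= \sum_x degree e x + 2.

Local Notation d := (degree e).
Definition Dmax := \max_(x : T) d x.
Local Notation Δ := Dmax.

Lemma dmax x : d x <= Δ.
Proof. exact: leq_bigmax. Qed.

Lemma exists_max : exists u, d u = Δ.
Proof.
have hT0 : 0 < #|T| by rewrite hT; lia.
by have [u hu] := eq_bigmax d hT0; exists u; rewrite /Dmax hu.
Qed.

Lemma sum_le_max : \sum_x d x <= 2 * n * Δ.
Proof.
rewrite -hT -sum_nat_const; apply: leq_sum => x _; exact: dmax.
Qed.

Lemma step0 : n <= Δ.
Proof.
have h := sum_le_max; case: (leqP n Δ) => // hlt.
have : 2 * n * Δ <= 2 * n * (n - 1) by apply: leq_mul => //; lia.
nia.
Qed.

Lemma F1 u c y b : c \in Nbr e u -> b \in Nbr e u -> y != u -> y != c -> b != c ->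
  e y b -> d c != d y.
Proof.
rewrite !inE => huc hub yu yc bc hyb; apply/eqP => hd.
apply: (noP3 eirr valid (a:=c) (x:=u) (y:=b) (b:=y)) => //.
- by rewrite esym.
- by rewrite esym.
- by rewrite eq_sym.
- by rewrite eq_sym.
- by rewrite eq_sym.
Qed.

Lemma F2 u y b x : d u = d y -> y != u -> e y b -> b != u -> e u x -> e x b ->
  x != y -> False.
Proof.
move=> hd yu hyb bu hux hxb xy.
apply: (noP3 eirr valid (a:=u) (x:=x) (y:=b) (b:=y)) => //.
- by rewrite esym.
- by rewrite eq_sym.
- by rewrite eq_sym.
Qed.

End Main.

Section Nice.
Variables (T : finType) (e : rel T) (n : nat).
Hypothesis esym : symmetric e.
Hypothesis eirr : irreflexive e.
Hypothesis valid : no_equal_degree_path3 e.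
Hypothesis hn : 3 <= n.
Hypothesis hT : #|T| = 2 * n.
Hypothesis hS : 2 * (n * n) <= \sum_x degree e x + 2.

Local Notation d := (degree e).
Local Notation Δ := (Dmax e).

Lemma nice u : d u = Δ -> (forall a b, a \in Nbr e u -> b \in Nbr e u -> ~~ e a b) ->
  [/\ Δ = n.+1, (forall a w, a \in Nbr e u -> w \in Wset e u -> e a w)
    & (forall w, w \in Wset e u -> d w = Δ)].
Proof.
move=> hu indep.
have hT' := cardT_split eirr u.
have hs := sum_split eirr d u.
set D := Nbr e u in hs *; set W := Wset e u in hT' hs *.
have hD : #|D| = Δ by rewrite -hu.
set q := #|W|.
have hdD : forall a, a \in D -> d a = 1 + #|Nbr e a :&: W|.
  move=> a ha; rewrite (degD esym eirr ha).
  suff -> : Nbr e a :&: Nbr e u = set0 by rewrite cards0.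
  apply/setP => b; rewrite !inE; apply/negP => /andP [hab hb].
  by move: (indep a b ha); rewrite inE hb hab => /(_ isT).
have hsq a : #|Nbr e a :&: W| <= q by apply: card_NW.
pose X := \sum_(a in D) (q - #|Nbr e a :&: W|).
have hX : \sum_(a in D) d a + X = #|D| * (1 + q).
  rewrite -big_split -sum_nat_const; apply: eq_bigr => a ha /=; rewrite hdD //.
  have := hsq a; lia.
pose Y := \sum_(w in W) (Δ - d w).
have hY : \sum_(w in W) d w + Y = q * Δ.
  rewrite -big_split -sum_nat_const; apply: eq_bigr => w _ /=; have := dmax e w; lia.
have h0 := step0 hn hT hS.
rewrite hD in hX; rewrite hu in hs, hT'.
set k := Δ - n.
have hk : Δ = n + k by lia.
have hnk : n = 1 + q + k by lia.
have e2 : Δ * (1 + q) + k * k = n * n.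
  rewrite hk hnk; set r := 1 + q; nia.
have e1 : \sum_x d x + X + Y = 2 * (Δ * (1 + q)).
  rewrite hs; have : Δ * (1 + q) = Δ + q * Δ by rewrite mulnDr muln1 mulnC.
  lia.
have key : 2 * (k * k) + X + Y <= 2 by lia.
have fullW : forall a, a \in D -> #|Nbr e a :&: W| = q -> W \subset Nbr e a.
  move=> a ha hc; apply/subsetP => w hw.
  have : Nbr e a :&: W == W by rewrite eqEcard subsetIr hc leqnn.
  by move/eqP => hEq; move: hw; rewrite -hEq => /setIP [].
have hk1 : k <= 1 by nia.
case: (posnP k) => hk0.
  exfalso.
  have hXY : X + Y <= 2 by lia.
  have [a' ha' hq'] : exists2 a', a' \in D & #|Nbr e a' :&: W| = q.
    case: (boolP [exists a in D, #|Nbr e a :&: W| == q]) => [/exists_inP [a' ha' /eqP hq']| /exists_inPn hno].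
      by exists a'.
    have : #|D| * 1 <= X.
      apply: sum_ge_const => a ha; have := hno a ha; have := hsq a; lia.
    lia.
  have [a ha hpos] : exists2 a, a \in D :\ a' & 0 < #|Nbr e a :&: W|.
    case: (boolP [exists a in D :\ a', 0 < #|Nbr e a :&: W|]) => [/exists_inP [a ha hpos] | /exists_inPn hno2].
      by exists a.
    have h1 : #|D :\ a'| * q <= X.
      apply: leq_trans (sum_subset_le _ (subD1set D a')).
      apply: sum_ge_const => a ha; have := hno2 a ha; lia.
    have h2 : #|D :\ a'| = Δ - 1 by have := cardsD1 a' D; rewrite ha' hD; lia.
    rewrite h2 in h1; nia.
  have [w hw] : exists w, w \in Nbr e a :&: W by apply/card_gt0P.
  case/setIP: hw => hwa hwW.
  have hwa' : w \in Nbr e a' by apply: (subsetP (fullW a' ha' hq')).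
  move: ha; rewrite !inE => /andP [haa' hua].
  apply: (noP3 eirr valid (a:=u) (x:=a) (y:=w) (b:=a')) => //.
  - by move: hwa; rewrite inE.
  - by move: hwa'; rewrite inE esym.
  - by move: hwW; rewrite inE eq_sym => /andP [].
  - by apply: (e_neq eirr); move: ha'; rewrite inE.
  - by rewrite hu (hdD a' ha') hq'; lia.
have hk2 : k = 1 by lia.
have hX0 : X = 0 by lia.
have hY0 : Y = 0 by lia.
split.
- by lia.
- move=> a w ha hw.
  have h := sum0_term hX0 ha; have hc : #|Nbr e a :&: W| = q by have := hsq a; lia.
  by have := subsetP (fullW a ha hc) w hw; rewrite inE.
- move=> w hw; have h := sum0_term hY0 hw; have := dmax e w; lia.
Qed.

End Nice.

Section Iso.
Variables (T : finType) (e : rel T) (n : nat).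
Hypothesis esym : symmetric e.
Hypothesis eirr : irreflexive e.
Hypothesis hn : 3 <= n.
Hypothesis hT : #|T| = 2 * n.

Local Notation d := (degree e).

Lemma bip_iso (D : {set T}) :
  #|D| = n.+1 -> (forall x y, e x y = ((x \in D) != (y \in D))) ->
  graph_iso e (Kbip n.-1 n.+1).
Proof.
move=> hD hxy.
have hA : #|~: D| = n.-1 by rewrite cardsCs setCK hT hD; lia.
have [b0 hb0] : exists b0, b0 \in D by apply/card_gt0P; rewrite hD.
have [a0 ha0] : exists a0, a0 \in ~: D by apply/card_gt0P; rewrite hA; lia.
pose f (x : T) : ('I_n.-1 + 'I_n.+1)%type :=
  if x \in D then inr (cast_ord hD (enum_rank_in hb0 x))
  else inl (cast_ord hA (enum_rank_in ha0 x)).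
exists f; split.
  apply: inj_card_bij; last by rewrite card_sum !card_ord hT; lia.
  move=> x y; rewrite /f.
  case: ifP => hx; case: ifP => hy //= hfe.
    have h : enum_rank_in hb0 x = enum_rank_in hb0 y.
      by apply: val_inj; case: hfe.
    by rewrite -(enum_rankK_in hb0 hx) -(enum_rankK_in hb0 hy) h.
  have hx' : x \in ~: D by rewrite inE hx.
  have hy' : y \in ~: D by rewrite inE hy.
  have h : enum_rank_in ha0 x = enum_rank_in ha0 y.
    by apply: val_inj; case: hfe.
  by rewrite -(enum_rankK_in ha0 hx') -(enum_rankK_in ha0 hy') h.
move=> x y; rewrite hxy /f.
by case: ifP => hx; case: ifP => hy.
Qed.

Lemma nice_iso u : d u = n.+1 ->
  (forall a b, a \in Nbr e u -> b \in Nbr e u -> ~~ e a b) ->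
  (forall a w, a \in Nbr e u -> w \in Wset e u -> e a w) ->
  (forall w, w \in Wset e u -> d w = n.+1) ->
  graph_iso e (Kbip n.-1 n.+1).
Proof.
move=> hu indep hDW hW.
have hWW : forall w w', w \in Wset e u -> w' \in Wset e u -> ~~ e w w'.
  move=> w w' hw hw'.
  have h := degW esym hw; rewrite hW // in h.
  have hI : Nbr e w :&: Nbr e u = Nbr e u.
    apply/setIidPr/subsetP => a ha; rewrite inE esym; exact: hDW.
  rewrite hI -degE hu in h.
  have h0 : #|Nbr e w :&: Wset e u| = 0 by lia.
  apply/negP => hww'.
  have hin : w' \in Nbr e w :&: Wset e u by rewrite inE hw' inE hww'.
  have : 0 < #|Nbr e w :&: Wset e u| by apply/card_gt0P; exists w'.
  by rewrite h0.
apply: (bip_iso (D := Nbr e u)); first by rewrite -degE hu.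
move=> x y.
have hWin z : z \notin Nbr e u -> z != u -> z \in Wset e u.
  by move=> h1 h2; rewrite inE h2; move: h1; rewrite inE => ->.
case hx: (x \in Nbr e u); case hy: (y \in Nbr e u) => /=.
- by apply/negbTE; apply: indep.
- case: (y =P u) => [->|/eqP yu]; first by rewrite esym; move: hx; rewrite inE.
  by apply: hDW => //; apply: hWin => //; rewrite hy.
- case: (x =P u) => [->|/eqP xu]; first by move: hy; rewrite inE.
  by rewrite esym; apply: hDW => //; apply: hWin => //; rewrite hx.
- case: (x =P u) => [->|/eqP xu]; first by move: hy; rewrite inE => /negbT/negbTE.
  case: (y =P u) => [->|/eqP yu].
    by rewrite esym; move: hx; rewrite inE => /negbT/negbTE.
  by apply/negbTE; apply: hWW; apply: hWin => //; rewrite ?hx ?hy.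
Qed.

End Iso.

Lemma amgm a b n : a + b = 2 * n -> a * b <= n * n.
Proof.
move=> h.
have : (a - n) * (a - n) + a * b = n * n \/ (n - a) * (n - a) + a * b = n * n by nia.
nia.
Qed.

Lemma mulmono t w0 q D : t <= w0 -> q <= D + 1 ->
  t * (D + 1) + w0 * q <= w0 * (D + 1) + t * q.
Proof.
move=> h1 h2.
have := leq_mul h1 (leqnn (D + 1 - q)).
rewrite !mulnBr.
have : t * q <= t * (D + 1) by apply: leq_mul.
have : w0 * q <= w0 * (D + 1) by apply: leq_mul.
lia.
Qed.

Lemma step2_arith S SD SW D q t d0 w0 r n :
  S = D + SD + SW -> SD <= t * D + d0 * (1 + q) -> SW + w0 <= r * D + w0 * q ->
  r + w0 = q -> d0 + t = D -> t <= w0 -> 1 + D + q = 2 * n -> 2 <= t ->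
  2 * (n * n) <= S + 2 -> n <= D -> False.
Proof.
move=> h1 h2 h3 h4 h5 h6 h7 h8 h9 h11.
have h10 : D * (1 + q) <= n * n by apply: amgm; lia.
have hq : q <= D + 1 by lia.
have h12 := @mulmono t w0 q D h6 hq.
have hA : d0 * (1 + q) + t * (1 + q) = D * (1 + q) by rewrite -mulnDl h5.
have hB : r * D + w0 * D = q * D by rewrite -mulnDl h4.
lia.
Qed.

Section Step2.
Variables (T : finType) (e : rel T) (n : nat).
Hypothesis esym : symmetric e.
Hypothesis eirr : irreflexive e.
Hypothesis valid : no_equal_degree_path3 e.
Hypothesis hn : 3 <= n.
Hypothesis hT : #|T| = 2 * n.
Hypothesis hS : 2 * (n * n) <= \sum_x degree e x + 2.

Local Notation d := (degree e).
Local Notation Δ := (Dmax e).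

Lemma step2 u w a1 a2 : d u = Δ -> d w = Δ -> w != u -> ~~ e u w ->
  a1 \in Nbr e u -> a2 \in Nbr e u -> e a1 a2 -> False.
Proof.
move=> hu hw wu nuw ha1 ha2 h12.
have hT' := cardT_split eirr u.
have hs := sum_split eirr d u.
set D := Nbr e u in hs ha1 ha2 *; set W := Wset e u in hT' hs *.
set q := #|W| in hT' *.
have hD : #|D| = Δ by rewrite -hu.
pose D1 := [set a in D | [exists b in D, e a b]].
pose D0 := D :\: D1.
pose W0 := [set x in W | [forall b in D, ~~ e x b]].
have sD1 : D1 \subset D by apply/subsetP => a; rewrite inE => /andP [].
have sW0 : W0 \subset W by apply/subsetP => a; rewrite inE => /andP [].
have hDcard : #|D0| + #|D1| = Δ.
  by rewrite -hD -(cardsID D1 D) (setIidPr sD1) addnC.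
have hWcard : #|W :\: W0| + #|W0| = q.
  by rewrite /q -(cardsID W0 W) (setIidPr sW0) addnC.
have bD0 : forall a, a \in D0 -> d a <= 1 + q.
  move=> a; rewrite inE => /andP [hn1 haD].
  rewrite (degD esym eirr haD).
  suff -> : Nbr e a :&: Nbr e u = set0 by rewrite cards0 addn0 leq_add2l card_NW.
  apply/setP => b; rewrite !inE; apply/negP => /andP [hab hb].
  move: hn1; rewrite inE haD /=; apply/negP/negPn/exists_inP; exists b => //.
  by rewrite inE.
have bW0 : forall x, x \in W0 -> d x + 1 <= q.
  move=> x; rewrite inE => /andP [hxW /forall_inP hx].
  rewrite (degW esym hxW).
  suff -> : Nbr e x :&: Nbr e u = set0 by rewrite cards0 add0n addn1; apply: card_NWw.
  apply/setP => b; rewrite !inE; apply/negP => /andP [hxb hb].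
  by move: (hx b); rewrite inE hb hxb => /(_ isT).
have hNw : Nbr e w \subset D0 :|: W0.
  apply/subsetP => b; rewrite inE => hwb.
  have bu : b != u by apply: contraNneq nuw => <-; rewrite esym.
  have noD : forall x, x \in D -> ~~ e b x.
    move=> x hx; apply/negP => hbx.
    apply: (F2 esym eirr valid (u:=u) (y:=w) (b:=b) (x:=x)) => //.
    - by rewrite hu hw.
    - by move: hx; rewrite inE.
    - by rewrite esym.
    - by apply: contraNneq nuw => <-; move: hx; rewrite inE.
  case hbD: (b \in D).
    apply/setUP; left; rewrite inE hbD andbT inE hbD /=.
    by apply/negP => /exists_inP [x hx hbx]; move: (noD x hx); rewrite hbx.
  apply/setUP; right; rewrite inE; apply/andP; split.
    by rewrite inE bu; move: hbD; rewrite inE => ->.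
  by apply/forall_inP => x hx; apply: noD.
have ht2 : 2 <= #|D1|.
  have h1 : a1 \in D1 by rewrite inE ha1; apply/exists_inP; exists a2.
  have h2 : a2 \in D1 by rewrite inE ha2; apply/exists_inP; exists a1; rewrite // esym.
  rewrite (cardsD1 a1) h1 ltnS; apply/card_gt0P; exists a2.
  by rewrite in_setD1 h2 andbT; apply: contraTneq h12 => ->; rewrite eirr.
have hw0 : #|D1| <= #|W0|.
  have := subset_leq_card hNw; rewrite -degE hw.
  have := (leq_card_setU D0 W0).1.
  lia.
have hSD : \sum_(a in D) d a <= #|D1| * Δ + #|D0| * (1 + q).
  rewrite (big_setID D1) /= (setIidPr sD1) -/D0.
  apply: leq_add.
    have := @sum_le_const T D1 d Δ; apply => a _; exact: dmax.
  exact: (sum_le_const bD0).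
have hSW : \sum_(x in W) d x + #|W0| <= #|W :\: W0| * Δ + #|W0| * q.
  rewrite (big_setID W0) /= (setIidPr sW0) -addnA [_ + #|W0|]addnC addnA addnC.
  apply: leq_add; first by apply: sum_le_const => x _; apply: dmax.
  rewrite -[X in _ + X <= _]sum1_card -big_split /= -sum_nat_const; apply: leq_sum => x hx.
  by rewrite addn1 -ltnS -addn1; apply: bW0.
have h0 := step0 hn hT hS.
rewrite hu in hs hT'.
have h7 : 1 + Δ + q = 2 * n by rewrite -hT hT'.
exact: (step2_arith hs hSD hSW hWcard hDcard hw0 h7 ht2 hS h0).
Qed.

End Step2.

Section Star.
Variables (T : finType) (e : rel T) (n : nat).
Hypothesis esym : symmetric e.
Hypothesis eirr : irreflexive e.
Hypothesis valid : no_equal_degree_path3 e.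
Hypothesis hn : 3 <= n.
Hypothesis hT : #|T| = 2 * n.
Hypothesis hS : 2 * (n * n) <= \sum_x degree e x + 2.

Local Notation d := (degree e).
Local Notation Δ := (Dmax e).

Lemma star u a : d u = Δ -> d a = Δ -> e u a -> Δ <= n.
Proof.
move=> hu ha hua.
have hT' := cardT_split eirr u.
set D := Nbr e u; set W := Wset e u in hT' *.
set q := #|W| in hT' *.
have haD : a \in D by rewrite inE.
have au : a != u by rewrite eq_sym (e_neq eirr hua).
have keyF : forall b x, e a b -> b != u -> x \in D -> e x b -> x = a.
  move=> b x hab bu hx hxb; apply/eqP/negPn/negP => xa.
  apply: (F2 esym eirr valid (u:=u) (y:=a) (b:=b) (x:=x)) => //.
  - by rewrite hu ha.
  - by move: hx; rewrite inE.
set B := Nbr e a :&: D; set C := Nbr e a :&: W.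
have hda : d a = 1 + #|B| + #|C| by rewrite (degD esym eirr haD).
have hCq : #|C| <= q by apply: card_NW.
have hBb : forall b, b \in B -> 2 <= d b <= 2 + (q - #|C|).
  move=> b; rewrite inE => /andP [hab hbD].
  rewrite inE in hab.
  have bu : b != u by move: hbD; rewrite inE; apply: contraTneq => ->; rewrite eirr.
  rewrite (degD esym eirr hbD).
  have h1 : Nbr e b :&: Nbr e u \subset [set a].
    apply/subsetP => x; rewrite !inE => /andP [hbx hux].
    by apply/eqP; apply: (keyF b x hab bu); rewrite ?inE // esym.
  have h1' : a \in Nbr e b :&: Nbr e u by rewrite !inE esym hab hua.
  have hc1 : #|Nbr e b :&: Nbr e u| = 1.
    apply/eqP; rewrite eqn_leq; apply/andP; split.
      by rewrite -(cards1 a); apply: subset_leq_card.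
    by apply/card_gt0P; exists a.
  have h2 : Nbr e b :&: Wset e u \subset W :\: C.
    apply/subsetP => c; rewrite !inE => /andP [hbc hcW].
    move: hcW => /andP [hcu hnuc]; rewrite hcu hnuc !andbT; apply/negP => hac.
    have hba := keyF c b hac hcu hbD hbc; rewrite hba eirr in hab.
    by [].
  have h3 := subset_leq_card h2.
  have h4 : #|W :\: C| = q - #|C|.
    have sCW : C \subset W by apply: subsetIr.
    have := cardsID C W; rewrite (setIidPr sCW) -/q; lia.
  rewrite hc1; lia.
have hinj : {in B &, injective d}.
  move=> b b' hb hb' hd; apply/eqP/negPn/negP => bb'.
  move: hb hb'; rewrite !inE => /andP [hab hub] /andP [hab' hub'].
  apply: (noP3 eirr valid (a:=b) (x:=a) (y:=u) (b:=b')) => //.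
  - by rewrite esym.
  - by rewrite esym.
  - by rewrite eq_sym (e_neq eirr hub).
  - exact: (e_neq eirr hab').
have hBc := card_inj_range hinj hBb.
have h0 := step0 hn hT hS.
rewrite hu in hT'.
lia.
Qed.

Definition Mset := [set x | d x == Δ].

Lemma sum_le_M : \sum_x d x <= #|T| * (Δ - 1) + #|Mset|.
Proof.
have -> : #|Mset| = \sum_x (x \in Mset : nat).
  by rewrite -sum1_card big_mkcond /=; apply: eq_bigr => x _; case: (x \in Mset).
rewrite -sum_nat_const -big_split /=; apply: leq_sum => x _.
have := dmax e x; rewrite inE; case: eqP => [h|h] /=; lia.
Qed.

Lemma clique3 : (forall x y, x \in Mset -> y \in Mset -> x != y -> e x y) -> #|Mset| <= 3.
Proof.
move=> hcl; case: (leqP #|Mset| 3) => // h4.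
have [p1 hp1] : exists p1, p1 \in Mset by apply/card_gt0P; lia.
have h1 : 1 < #|Mset| by lia.
have h2 : 2 < #|Mset| by lia.
have [p2 /andP [hp2 p21]] := pick_other p1 h1.
have [p3 /and3P [hp3 p31 p32]] := pick_other2 p1 p2 h2.
have [p4 /and4P [hp4 p41 p42 p43]] := pick_other3 p1 p2 p3 h4.
apply: False_ind; apply: (noP3 eirr valid (a:=p1) (x:=p2) (y:=p3) (b:=p4)).
- by apply: hcl; rewrite // eq_sym.
- by apply: hcl; rewrite // eq_sym.
- by apply: hcl; rewrite // eq_sym.
- by rewrite eq_sym.
- by rewrite eq_sym.
- by rewrite eq_sym.
- by move: hp1 hp4; rewrite !inE => /eqP -> /eqP ->.
Qed.

Lemma caseC u a : d u = Δ -> d a = Δ -> e u a ->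
  (forall x y, x \in Mset -> y \in Mset -> x != y -> e x y) -> False.
Proof.
move=> hu ha hua hcl.
have hD : Δ <= n by apply: (star hu ha hua).
have h0 := step0 hn hT hS.
have h3 := clique3 hcl.
have := sum_le_M; rewrite hT.
have hDn : Δ = n by lia.
rewrite hDn; nia.
Qed.

End Star.

Lemma arithA1 n q k D K SD SW S :
  n = q + k + 1 -> D = q + 2 * k + 1 -> K + 2 = 2 * k -> 1 <= k -> 3 <= n ->
  2 * SD <= 2 * (D * q.+1) + K * K.+1 + 2 * (0 < K) -> SW <= q * (D - 1) ->
  S = D + SD + SW -> 2 * (n * n) <= S + 2 -> False.
Proof.
move=> hn hD hK hk hn3 h1 h2 h3 h4.
case: (posnP K) => hK0.
  have hk1 : k = 1 by lia.
  subst k K; rewrite /= in h1.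
  have e1 : D - 1 = q + 2 by lia.
  rewrite e1 in h2; subst D n; nia.
have e1 : D - 1 = q + 2 * k by lia.
rewrite e1 in h2; rewrite hK0 /= in h1.
subst D n; nia.
Qed.

Lemma arithA2 n q k D K SD SW S :
  n = q + k + 1 -> D = q + 2 * k + 1 -> K + 1 = 2 * k -> 1 <= k -> 4 <= n -> 1 <= q ->
  2 * SD <= 2 * (D * q.+1) + K * K.+1 + 2 -> SW <= q * (D - 2) ->
  S = D + SD + SW -> 2 * (n * n) <= S + 2 -> False.
Proof.
move=> hn hD hK hk hn3 hq1 h1 h2 h3 h4.
have e1 : D - 2 = q + K by lia.
rewrite e1 in h2.
subst D n; nia.
Qed.

Section Unique.
Variables (T : finType) (e : rel T) (n : nat).
Hypothesis esym : symmetric e.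
Hypothesis eirr : irreflexive e.
Hypothesis valid : no_equal_degree_path3 e.
Hypothesis hn : 3 <= n.
Hypothesis hT : #|T| = 2 * n.
Hypothesis hS : 2 * (n * n) <= \sum_x degree e x + 2.

Local Notation d := (degree e).
Local Notation Δ := (Dmax e).

Variable u : T.
Hypothesis hu : d u = Δ.
Hypothesis huniq : forall x, x != u -> d x < Δ.

Let D := Nbr e u.
Let W := Wset e u.
Let q := #|W|.

Lemma hT2 : 1 + Δ + q = 2 * n.
Proof. by rewrite -hT (cardT_split eirr u) hu. Qed.

Lemma hD : #|D| = Δ.
Proof. by rewrite -hu. Qed.

Lemma degD_le a : a \in D -> d a <= 1 + #|Nbr e a :&: D| + q.
Proof. by move=> ha; rewrite (degD esym eirr ha) leq_add2l card_NW. Qed.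

Lemma two_nbrs a : a \in D -> q + 3 <= d a ->
  exists b1 b2, [/\ b1 \in D, b2 \in D, b1 != b2, e a b1 & e a b2].
Proof.
move=> ha hda; have h := degD_le ha.
have h2 : 1 < #|Nbr e a :&: D| by lia.
have [b1 hb1] : exists b1, b1 \in Nbr e a :&: D by apply/card_gt0P; lia.
have [b2 /andP [hb2 b21]] := pick_other b1 h2.
move: hb1 hb2; rewrite !inE => /andP [h11 h12] /andP [h21 h22].
by exists b1, b2; split; rewrite ?inE // eq_sym.
Qed.

Lemma one_nbr a : a \in D -> q + 2 <= d a -> exists b, b \in D /\ e a b.
Proof.
move=> ha hda; have h := degD_le ha.
have [b hb] : exists b, b \in Nbr e a :&: D by apply/card_gt0P; lia.
by move: hb; rewrite !inE => /andP [h1 h2]; exists b; rewrite inE.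
Qed.

Lemma uniq_high a c : a \in D -> q + 3 <= d a -> c \in D -> c != a -> d c != d a.
Proof.
move=> ha hda hc ca.
have [b1 [b2 [hb1 hb2 b12 hab1 hab2]]] := two_nbrs ha hda.
have au : a != u by move: ha; rewrite inE; apply: contraTneq => ->; rewrite eirr.
have [b [hb bc hab]] : exists b, [/\ b \in D, b != c & e a b].
  case: (b1 =P c) => [eb1|/eqP nb1]; last by exists b1.
  by exists b2; split => //; rewrite -eb1 eq_sym.
by apply: (F1 esym eirr valid hc hb au _ bc hab); rewrite eq_sym.
Qed.

Lemma mid_le2 : #|[set a in D | d a == q + 2]| <= 2.
Proof.
case: (leqP #|[set a in D | d a == q + 2]| 2) => // h3.
set H1 := [set a in D | d a == q + 2] in h3.
have [a ha] : exists a, a \in H1 by apply/card_gt0P; lia.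
have h1 : 1 < #|H1| by lia.
have [b /andP [hb ba]] := pick_other a h1.
have [c /and3P [hc ca cb]] := pick_other2 a b h3.
have inH1 : forall x, (x \in H1) = (x \in D) && (d x == q + 2) by move=> x; rewrite !inE.
move: ha hb hc; rewrite !inH1 => /andP [haD /eqP hda] /andP [hbD /eqP hdb] /andP [hcD /eqP hdc].
have hda' : q + 2 <= d a by rewrite hda.
have [a1 [ha1 haa1]] := one_nbr haD hda'.
have au : a != u by move: haD; rewrite inE; apply: contraTneq => ->; rewrite eirr.
case: (a1 =P b) => [ea1|/eqP na1].
  have : d c != d a.
    apply: (F1 esym eirr valid hcD ha1 au _ _ haa1); first by rewrite eq_sym.
    by rewrite ea1 eq_sym.
  by rewrite hdc hda eqxx.
have : d b != d a by apply: (F1 esym eirr valid hbD ha1 au _ na1 haa1); rewrite eq_sym.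
by rewrite hdb hda eqxx.
Qed.

Lemma sumD_bound L : (forall a, a \in D -> d a <= L) ->
  2 * (\sum_(a in D) d a) <= 2 * (Δ * q.+1) + (L - q.+1) * (L - q.+1).+1 + 2 * (q.+1 < L).
Proof.
move=> hL.
set K := L - q.+1.
pose f a := d a - q.+1.
have h1 : \sum_(a in D) d a <= #|D| * q.+1 + \sum_(a in D) f a.
  rewrite -sum_nat_const -big_split /=; apply: leq_sum => a _; rewrite /f; lia.
pose H2 := [set a in D | q + 2 < d a].
pose H1 := [set a in D | d a == q + 2].
have inH2 : forall x, (x \in H2) = (x \in D) && (q + 2 < d x) by move=> x; rewrite !inE.
have inH1 : forall x, (x \in H1) = (x \in D) && (d x == q + 2) by move=> x; rewrite !inE.
have sH2 : H2 \subset D by apply/subsetP => a; rewrite inH2 => /andP [].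
have hsplit : \sum_(a in D) f a = \sum_(a in H2) f a + \sum_(a in D :\: H2) f a.
  by rewrite (big_setID H2) /= (setIidPr sH2).
have hrest : \sum_(a in D :\: H2) f a <= #|H1|.
  rewrite (big_setID H1) /=.
  have -> : \sum_(a in (D :\: H2) :\: H1) f a = 0.
    rewrite big1 // => a; rewrite !in_setD inH1 inH2 /f => /andP [hnH1 /andP [hnH2 haD]].
    move: hnH1 hnH2; rewrite haD /=; lia.
  rewrite addn0; apply: leq_trans (_ : \sum_(a in (D :\: H2) :&: H1) 1 <= _).
    apply: leq_sum => a; rewrite in_setI in_setD inH1 inH2 /f => /andP [/andP [hnH2 haD] hH1].
    move: hnH2 hH1; rewrite haD /=; lia.
  rewrite sum1_card; apply: subset_leq_card; exact: subsetIr.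
have hH1 : #|H1| <= 2 by apply: mid_le2.
have hinj : {in H2 &, injective f}.
  move=> a b; rewrite !inH2 => /andP [haD hda] /andP [hbD hdb]; rewrite /f => hf.
  apply/eqP/negPn/negP => ab.
  have hda3 : q + 3 <= d a by lia.
  have ba : b != a by rewrite eq_sym.
  have := uniq_high haD hda3 hbD ba.
  by apply/negP/negPn/eqP; lia.
have hrange : forall a, a \in H2 -> 2 <= f a <= K.
  by move=> a; rewrite inH2 /f => /andP [haD hda]; have := hL a haD; rewrite /K; lia.
have hH2 := sum_inj_range hinj hrange.
rewrite hD in h1.
case: (posnP K) => hK.
  have e2 : \sum_(a in H2) f a = 0.
    by rewrite big1 // => a; rewrite inH2 => /andP [haD hda]; have := hL a haD; rewrite /K in hK; lia.
  have e1 : #|H1| = 0.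
    apply/eqP; rewrite cards_eq0; apply/eqP/setP => a; rewrite inH1 in_set0.
    by apply/negP => /andP [haD /eqP hda]; have := hL a haD; rewrite /K in hK; lia.
  have hq : (q.+1 < L) = false by rewrite /K in hK; lia.
  rewrite hq hK; lia.
have hq : (q.+1 < L) = true by rewrite /K in hK; lia.
rewrite hq; lia.
Qed.

Lemma sumW_le1 : \sum_(w in W) d w <= q * (Δ - 1).
Proof.
rewrite /q -sum_nat_const; apply: leq_sum => w; rewrite inE => /andP [wu _].
by have := huniq wu; lia.
Qed.

Lemma dW_le2 a0 w : a0 \in D -> d a0 = Δ - 1 -> n < Δ -> w \in W -> d w <= Δ - 2.
Proof.
move=> ha0 hd0 hbig hw.
have wu : w != u by move: hw; rewrite inE => /andP [].
have hlt := huniq wu.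
suff : d w != Δ - 1 by lia.
case: (boolP [exists b in Nbr e w :&: D, b != a0]) => [/exists_inP [b hb ba0]|/exists_inPn hno].
  move: hb; rewrite inE => /andP [hwb hbD]; rewrite inE in hwb.
  have wa0 : w != a0.
    by apply: contraTneq hw => ->; rewrite inE; move: ha0; rewrite inE => ->; rewrite andbF.
  by rewrite -hd0 eq_sym; apply: (F1 esym eirr valid ha0 hbD wu wa0 ba0 hwb).
have h1 : #|Nbr e w :&: D| <= 1.
  rewrite -(cards1 a0); apply: subset_leq_card; apply/subsetP => b hb.
  by have := hno b hb; rewrite negbK inE.
have h2 := card_NWw eirr hw.
have h3 := degW esym hw.
have h4 := hT2.
rewrite -/D -/W -/q in h2 h3 h4.
lia.
Qed.

Lemma sumW_le2 a0 : a0 \in D -> d a0 = Δ - 1 -> n < Δ ->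
  \sum_(w in W) d w <= q * (Δ - 2).
Proof.
move=> ha0 hd0 hbig.
rewrite /q -sum_nat_const; apply: leq_sum => w hw; exact: (dW_le2 ha0 hd0 hbig hw).
Qed.

Lemma pigeon0 a0 : q = 0 -> a0 \in D -> d a0 = Δ - 1 -> False.
Proof.
move=> hq0 ha0 hd0.
have h2 := hT2; rewrite hq0 in h2.
have hDn : Δ = 2 * n - 1 by lia.
have au : a0 != u by move: ha0; rewrite inE; apply: contraTneq => ->; rewrite eirr.
set B := Nbr e a0 :&: D.
have hda0 := degD esym eirr ha0; rewrite -/D -/W in hda0.
have hW0 : #|Nbr e a0 :&: W| = 0 by have := card_NW e u a0; rewrite -/W -/q hq0; lia.
have hB : #|B| = Δ - 2 by rewrite -/B hW0 in hda0; lia.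
have inB : forall b, (b \in B) = e a0 b && (b \in D) by move=> b; rewrite in_setI inE.
have hinj : {in B &, injective d}.
  move=> b b' hb hb' hd; apply/eqP/negPn/negP => bb'.
  move: hb hb'; rewrite !inB => /andP [hab hub] /andP [hab' hub'].
  rewrite inE in hub hub'.
  apply: (noP3 eirr valid (a:=b) (x:=a0) (y:=u) (b:=b')) => //.
  - by rewrite esym.
  - by move: ha0; rewrite inE esym.
  - by move: hub'; rewrite ?inE.
  - by move: hub; rewrite ?inE => /(e_neq eirr); rewrite eq_sym.
  - exact: (e_neq eirr hab').
have hrange : forall b, b \in B -> 2 <= d b <= Δ - 2.
  move=> b hb; have hb' := hb; move: hb'; rewrite inB => /andP [hab hbD].
  have bu : b != u by move: hbD; rewrite inE; apply: contraTneq => ->; rewrite eirr.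
  have hlt := huniq bu.
  have h1 : 1 < #|B| by rewrite hB; lia.
  have [x /andP [hx xb]] := pick_other b h1.
  move: hx; rewrite inB => /andP [hax hxD].
  have ab : a0 != b by apply: (e_neq eirr hab).
  have hne : d b != d a0 by apply: (F1 esym eirr valid hbD hxD au ab xb hax).
  have hge : 2 <= d b.
    rewrite (degD esym eirr hbD).
    suff : 0 < #|Nbr e b :&: Nbr e u| by lia.
    by apply/card_gt0P; exists a0; rewrite !inE esym hab /=; move: ha0; rewrite inE.
  apply/andP; split => //; move: hne; rewrite hd0; lia.
have := card_inj_range hinj hrange.
rewrite hB; lia.
Qed.

Lemma special3 a0 : n = 3 -> q = 1 -> a0 \in D -> d a0 = Δ - 1 -> False.
Proof.
move=> hn3 hq1 ha0 hd0.
have h2 := hT2; rewrite hq1 hn3 in h2.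
have hD4 : Δ = 4 by lia.
have hs := sum_split eirr d u; rewrite -/D -/W hu in hs.
have [w hw] : exists w, w \in W by apply/card_gt0P; rewrite -/q hq1.
have hWw : [set w] = W.
  by apply/eqP; rewrite eqEcard sub1set hw cards1 -/q hq1 leqnn.
have hSW : \sum_(x in W) d x = d w by rewrite -hWw big_set1.
have hbig : n < Δ by lia.
have hdw2 := dW_le2 ha0 hd0 hbig hw.
have hdw := degW esym hw; rewrite -/D -/W in hdw.
have hww := card_NWw eirr hw; rewrite -/W -/q hq1 in hww.
have hL : forall a, a \in D -> d a <= Δ - 1.
  move=> a ha; have au : a != u by move: ha; rewrite inE; apply: contraTneq => ->; rewrite eirr.
  by have := huniq au; lia.
have hSD := sumD_bound hL.
rewrite hq1 hD4 /= in hSD.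
have hS' := hS; rewrite hn3 in hS'.
case: (leqP #|Nbr e w :&: D| 1) => hc.
  lia.
have hne : forall c, c \in D -> d c != d w.
  move=> c hc'.
  have [b1 hb1] : exists b1, b1 \in Nbr e w :&: D by apply/card_gt0P; lia.
  have [b2 /andP [hb2 b21]] := pick_other b1 hc.
  have wu : w != u by move: hw; rewrite inE => /andP [].
  have wc : w != c by apply: contraTneq hw => ->; rewrite inE; move: hc'; rewrite inE => ->; rewrite andbF.
  have [b [hb bc]] : exists b, b \in Nbr e w :&: D /\ b != c.
    case: (b1 =P c) => [eb1|/eqP nb1]; last by exists b1.
    by exists b2; split => //; rewrite -eb1.
  move: hb; rewrite in_setI => /andP [hwb hbD]; rewrite inE in hwb.
  exact: (F1 esym eirr valid hc' hbD wu wc bc hwb).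
have hdw2' : d w = 2 by lia.
have hmid : #|[set a in D | d a == 3]| <= 2 by have := mid_le2; rewrite hq1.
have hSD' : \sum_(c in D) d c <= #|D| + 2 * #|[set a in D | d a == 3]|.
  rewrite -sum1_card.
  have -> : #|[set a in D | d a == 3]| = \sum_(c in D) (d c == 3 : nat).
    rewrite -sum1_card [RHS]big_mkcond /= [LHS]big_mkcond /=; apply: eq_bigr => c _.
    by rewrite in_set; case: (c \in D); case: (d c == 3).
  rewrite big_distrr -big_split /=; apply: leq_sum => c hc'.
  have := hL c hc'; have := hne c hc'; rewrite hdw2' hD4.
  by case: (d c =P 3) => /= [-> //|]; lia.
rewrite hD hD4 in hSD'.
lia.
Qed.

Lemma caseA : False.
Proof.
have h0 := step0 hn hT hS.
case: (leqP Δ n) => hbig.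
  have hDn : Δ = n by lia.
  have hM : #|Mset e| <= 1.
    rewrite -(cards1 u); apply: subset_leq_card; apply/subsetP => x; rewrite !inE => /eqP hx.
    by apply/negPn/negP => xu; have := huniq xu; rewrite hx ltnn.
  have := sum_le_M hn hT hS; rewrite hT hDn; nia.
have hs := sum_split eirr d u; rewrite -/D -/W hu in hs.
have h2 := hT2.
set k := Δ - n.
case: (boolP [exists a0 in D, d a0 == Δ - 1]) => [/exists_inP [a0 ha0 /eqP hd0] | /exists_inPn hno].
  case: (posnP q) => hq0; first exact: (pigeon0 hq0 ha0 hd0).
  case: (leqP n 3) => hn3.
    have hn3' : n = 3 by lia.
    have hq1 : q = 1 by lia.
    exact: (special3 hn3' hq1 ha0 hd0).
  have hL : forall a, a \in D -> d a <= Δ - 1.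
    move=> a ha; have au : a != u by move: ha; rewrite inE; apply: contraTneq => ->; rewrite eirr.
    by have := huniq au; lia.
  have hSD := sumD_bound hL.
  have hSW := sumW_le2 ha0 hd0 hbig.
  have hK : (q.+1 < Δ - 1) = true by lia.
  rewrite hK /= in hSD.
  apply: (arithA2 (n:=n) (q:=q) (k:=k) (D:=Δ) (K:=Δ - 1 - q.+1) _ _ _ _ _ _ hSD hSW hs hS); lia.
have hL : forall a, a \in D -> d a <= Δ - 2.
  move=> a ha; have au : a != u by move: ha; rewrite inE; apply: contraTneq => ->; rewrite eirr.
  by have := huniq au; have := hno a ha; lia.
have hSD := sumD_bound hL.
have hSW := sumW_le1.
have hK : (q.+1 < Δ - 2) = (0 < Δ - 2 - q.+1) by lia.
rewrite hK in hSD.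
apply: (arithA1 (n:=n) (q:=q) (k:=k) (D:=Δ) (K:=Δ - 2 - q.+1) _ _ _ _ _ hSD hSW hs hS); lia.
Qed.

End Unique.

Theorem theorem1p5 (n : nat) (T : finType) (e : rel T) :
  3 <= n ->
  simple_graph e ->
  #|T| = 2 * n ->
  n ^ 2 - 1 <= num_edges e ->
  no_equal_degree_path3 e ->
  graph_iso e (Kbip n.-1 n.+1).
Proof.
move=> hn [esym eirr] hT hm valid.
have hS : 2 * (n * n) <= \sum_x degree e x + 2.
  rewrite (handshake esym eirr); move: hm; rewrite -mulnn; lia.
have [u0 hu0] := exists_max hn hT hS.
case: (boolP [exists u, exists w, [&& degree e u == Dmax e, degree e w == Dmax e, w != u & ~~ e u w]]).
  case/existsP => u /existsP [w /and4P [/eqP hu /eqP hw wu nuw]].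
  case: (boolP [exists a1, exists a2, [&& a1 \in Nbr e u, a2 \in Nbr e u & e a1 a2]]).
    case/existsP => a1 /existsP [a2 /and3P [ha1 ha2 h12]].
    by exfalso; apply: (step2 esym eirr valid hn hT hS hu hw wu nuw ha1 ha2 h12).
  move/existsPn => hno.
  have indep : forall a b, a \in Nbr e u -> b \in Nbr e u -> ~~ e a b.
    move=> a b ha hb; have := hno a; move/existsPn/(_ b).
    by rewrite ha hb.
  have [hD hDW hW] := nice esym eirr valid hn hT hS hu indep.
  apply: (nice_iso esym hn hT (u:=u)); first by rewrite hu hD.
  - exact: indep.
  - exact: hDW.
  - by move=> x hx; rewrite hW // hD.
move/existsPn => hcl.
have hclique : forall x y, x \in Mset e -> y \in Mset e -> x != y -> e x y.
  move=> x y; rewrite !inE => /eqP hx /eqP hy xy.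
  have := hcl x; move/existsPn/(_ y); rewrite hx hy !eqxx eq_sym xy /=.
  by rewrite negbK.
case: (boolP [exists a, (degree e a == Dmax e) && (a != u0)]).
  case/existsP => a /andP [/eqP ha au].
  have hua : e u0 a by apply: hclique; rewrite ?inE ?hu0 ?ha // eq_sym.
  by exfalso; apply: (caseC esym eirr valid hn hT hS hu0 ha hua hclique).
move/existsPn => hno.
have huniq : forall x, x != u0 -> degree e x < Dmax e.
  move=> x xu; have := dmax e x; have := hno x; rewrite xu andbT; lia.
by exfalso; apply: (caseA esym eirr valid hn hT hS hu0 huniq).
Qed.
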